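(* Let $m\in\mathbb{N}$. If $S\subseteq\mathbb{N}^{\mathbb{N}}$ is $m$th-order guessable, then $S$ is in $\mathbf{\Delta}'_{m+2}$. More precisely, $S$ is a countable union of countable intersections, and also a countable intersection of countable unions, of sets that are $\mathbf{\Delta}^0_m$ if $m>0$ and clopen if $m=0$.
   Context: Baire space $\mathbb{N}^{\mathbb{N}}$ carries the product of discrete topologies; $\mathbf{\Sigma}^0_n,\mathbf{\Pi}^0_n,\mathbf{\Delta}^0_n$ are the boldface Borel pointclasses. Definition: $\mathbf{\Delta}'_2=\mathbf{\Delta}^0_2$; for $k>2$, $S\in\mathbf{\Delta}'_k$ iff $S$ is a countable union of countable intersections of $\mathbf{\Delta}^0_{k-2}$ sets and also a countable intersection of countable unions of $\mathbf{\Delta}^0_{k-2}$ sets. The language $\mathscr{L}_{\max}$ is the first-order language (with equality) having: a constant symbol $\overline{n}$ for each $n\in\mathbb{N}$; an $n$-ary function symbol $\tilde w$ for each $w:\mathbb{N}^n\to\mathbb{N}$; an $n$-ary predicate symbol $\tilde p$ for each $p\subseteq\mathbb{N}^n$; a special unary function symbol $\mathbf{f}$; and, for every $n$ and every $G:\mathbb{N}^n\times\mathbb{N}^{<\mathbb{N}}\to\mathbb{N}$, an $(n+1)$-ary function symbol $G\circ\mathbf{f}$. For $f\in\mathbb{N}^{\mathbb{N}}$, $\mathscr{M}_f$ is the structure with universe $\mathbb{N}$ interpreting $\overline n$ as $n$, $\tilde w$ as $w$, $\tilde p$ as $p$, $\mathbf f$ as $f$, and $G\circ\mathbf f$ as $(m_1,\dots,m_n,m)\mapsto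 G(m_1,\dots,m_n,f(0),\dots,f(m))$. For a sentence $\phi$, $f(\phi)=1$ if $\mathscr{M}_f\models\phi$ and $f(\phi)=0$ otherwise. Formula classes: ''quantifier-free'' means containing no quantifiers at all (not even bounded ones). $\Sigma_0=\Pi_0=\Delta_0$ is the set of quantifier-free formulas; $\Sigma_{n+1}=\{\exists x\,\phi:\phi\in\Pi_n\}$ and $\Pi_{n+1}=\{\forall x\,\phi:\phi\in\Sigma_n\}$; a formula is $\Delta_{n+1}$ if it is equivalent, in every structure $\mathscr{M}_f$ ($f\in\mathbb{N}^{\mathbb{N}}$), to some $\Sigma_{n+1}$ formula of $\mathscr{L}_{\max}$ and also to some $\Pi_{n+1}$ formula of $\mathscr{L}_{\max}$. For a set $\Sigma$ of symbols of $\mathscr{L}_{\max}$, a sentence ''of $\mathscr{L}_{\max}\cap\Sigma$'' is an $\mathscr{L}_{\max}$-sentence all of whose non-logical symbols lie in $\Sigma$. Definition ($m$th-order guessable): $S\subseteq\mathbb{N}^{\mathbb{N}}$ is $m$th-order guessable if there exist a countable set $\Sigma$ of $\mathscr{L}_{\max}$-symbols, a listing $\phi_0,\phi_1,\dots$ of all $\Delta_m$ sentences of $\mathscr{L}_{\max}\cap\Sigma$, and a function $G:\{0,1\}^{<\mathbb{N}}\to\mathbb{N}$ such that for every $f:\mathbb{N}\to\mathbb{N}$, $\lim_{n\to\infty}G(f(\phi_0),\dots,f(\phi_n))$ equals $1$ if $f\in S$ and $0$ if $f\notin S$. *)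

(* Defs.v *)
From mathcomp Require Import all_boot.
From Stdlib Require Import ClassicalEpsilon.
Set Implicit Arguments. Unset Strict Implicit. Unset Printing Implicit Defensive.

Definition baire := nat -> nat.
Definition bset := baire -> Prop.

Definition bcompl (S : bset) : bset := fun x => ~ S x.

(* open in the product of discrete topologies *)
Definition bopen (S : bset) : Prop :=
  forall g, S g -> exists k, forall h, (forall i, i < k -> h i = g i) -> S h.

Definition bclopen (S : bset) : Prop := bopen S /\ bopen (bcompl S).

(* Sigma0 n for n >= 1 (Sigma0 0 is not used; it is set to False).
   Sigma^0_1 = open; Sigma^0_{n+1} = countable unions of Pi^0_n sets,
   Pi^0_n = complements of Sigma^0_n sets. *)
Fixpoint Sigma0 (n : nat) (S : bset) : Prop :=
  match n with
  | 0 => False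
  | 1 => bopen S
  | (k.+1) as n' =>
      exists A : nat -> bset,
        (forall i, Sigma0 k (bcompl (A i))) /\
        (forall x, S x <-> exists i, A i x)
  end.

Definition Pi0 (n : nat) (S : bset) : Prop := Sigma0 n (bcompl S).
Definition Delta0 (n : nat) (S : bset) : Prop := Sigma0 n S /\ Pi0 n S.

Definition union_of_inters (P : bset -> Prop) (S : bset) : Prop :=
  exists A : nat -> nat -> bset,
    (forall i j, P (A i j)) /\ (forall x, S x <-> exists i, forall j, A i j x).

Definition inter_of_unions (P : bset -> Prop) (S : bset) : Prop :=
  exists A : nat -> nat -> bset,
    (forall i j, P (A i j)) /\ (forall x, S x <-> forall i, exists j, A i j x).

Definition Delta' (k : nat) (S : bset) : Prop :=
  if k == 2 then Delta0 2 S
  else union_of_inters (Delta0 (k - 2)) S /\ inter_of_unions (Delta0 (k - 2)) S.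

(* N^n is represented as 'I_n -> nat. *)

Inductive symbol : Type :=
| SymConst (k : nat)
| SymFun (n : nat) (w : ('I_n -> nat) -> nat)
| SymPred (n : nat) (p : ('I_n -> nat) -> Prop)
| SymF
| SymGf (n : nat) (G : ('I_n -> nat) -> seq nat -> nat).    (* G o f, arity n+1 *)

Inductive term : Type :=
| TVar (x : nat)
| TConst (k : nat)
| TFun (n : nat) (w : ('I_n -> nat) -> nat) (args : 'I_n -> term)
| TF (t : term)
| TGf (n : nat) (G : ('I_n -> nat) -> seq nat -> nat) (args : 'I_n -> term) (t : term).

Inductive formula : Type :=
| FEq (t1 t2 : term)
| FPred (n : nat) (p : ('I_n -> nat) -> Prop) (args : 'I_n -> term)
| FNot (A : formula)
| FAnd (A B : formula)
| FOr (A B : formula)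
| FImp (A B : formula)
| FEx (x : nat) (A : formula)
| FAll (x : nat) (A : formula).

Definition upd (e : nat -> nat) (x v : nat) : nat -> nat :=
  fun y => if y == x then v else e y.

Fixpoint teval (f : baire) (e : nat -> nat) (t : term) : nat :=
  match t with
  | TVar x => e x
  | TConst k => k
  | TFun n w args => w (fun i => teval f e (args i))
  | TF t => f (teval f e t)
  | TGf n G args t =>
      G (fun i => teval f e (args i)) (map f (iota 0 (teval f e t).+1))
  end.

Fixpoint sat (f : baire) (e : nat -> nat) (A : formula) : Prop :=
  match A with
  | FEq t1 t2 => teval f e t1 = teval f e t2
  | FPred n p args => p (fun i => teval f e (args i))
  | FNot A => ~ sat f e A
  | FAnd A B => sat f e A /\ sat f e B
  | FOr A B => sat f e A \/ sat f e B
  | FImp A B => sat f e A -> sat f e B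
  | FEx x A => exists v, sat f (upd e x v) A
  | FAll x A => forall v, sat f (upd e x v) A
  end.

Fixpoint tocc (x : nat) (t : term) : Prop :=
  match t with
  | TVar y => x = y
  | TConst _ => False
  | TFun n w args => exists i, tocc x (args i)
  | TF t => tocc x t
  | TGf n G args t => (exists i, tocc x (args i)) \/ tocc x t
  end.

Fixpoint free (x : nat) (A : formula) : Prop :=
  match A with
  | FEq t1 t2 => tocc x t1 \/ tocc x t2
  | FPred n p args => exists i, tocc x (args i)
  | FNot A => free x A
  | FAnd A B | FOr A B | FImp A B => free x A \/ free x B
  | FEx y A | FAll y A => x <> y /\ free x A
  end.

Definition sentence (A : formula) : Prop := forall x, ~ free x A.

Fixpoint term_in (Sig : symbol -> Prop) (t : term) : Prop :=
  match t with
  | TVar _ => True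
  | TConst k => Sig (SymConst k)
  | TFun n w args => Sig (SymFun w) /\ forall i, term_in Sig (args i)
  | TF t => Sig SymF /\ term_in Sig t
  | TGf n G args t => Sig (SymGf G) /\ (forall i, term_in Sig (args i)) /\ term_in Sig t
  end.

Fixpoint formula_in (Sig : symbol -> Prop) (A : formula) : Prop :=
  match A with
  | FEq t1 t2 => term_in Sig t1 /\ term_in Sig t2
  | FPred n p args => Sig (SymPred p) /\ forall i, term_in Sig (args i)
  | FNot A => formula_in Sig A
  | FAnd A B | FOr A B | FImp A B => formula_in Sig A /\ formula_in Sig B
  | FEx _ A | FAll _ A => formula_in Sig A
  end.

Fixpoint qfree (A : formula) : Prop :=
  match A with
  | FEq _ _ | FPred _ _ _ => True
  | FNot A => qfree A
  | FAnd A B | FOr A B | FImp A B => qfree A /\ qfree B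
  | FEx _ _ | FAll _ _ => False
  end.

Fixpoint isSigma (n : nat) (A : formula) : Prop :=
  match n with
  | 0 => qfree A
  | k.+1 => match A with FEx _ B => isPi k B | _ => False end
  end
with isPi (n : nat) (A : formula) : Prop :=
  match n with
  | 0 => qfree A
  | k.+1 => match A with FAll _ B => isSigma k B | _ => False end
  end.

Definition equiv_all (A B : formula) : Prop :=
  forall (f : baire) (e : nat -> nat), sat f e A <-> sat f e B.

Definition isDelta (n : nat) (A : formula) : Prop :=
  match n with
  | 0 => qfree A
  | k.+1 => (exists B, isSigma k.+1 B /\ equiv_all A B) /\
            (exists B, isPi k.+1 B /\ equiv_all A B)
  end.

Definition fval (f : baire) (A : formula) : bool :=
  if excluded_middle_informative (sat f (fun _ => 0) A) then true else false.

Definition countable_syms (Sig : symbol -> Prop) : Prop :=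
  exists g : nat -> option symbol, forall s, Sig s -> exists k, g k = Some s.

Definition guessable (m : nat) (S : bset) : Prop :=
  exists (Sig : symbol -> Prop) (phi : nat -> formula) (G : seq bool -> nat),
    countable_syms Sig /\
    (forall k, isDelta m (phi k) /\ sentence (phi k) /\ formula_in Sig (phi k)) /\
    (forall A, isDelta m A -> sentence A -> formula_in Sig A -> exists k, phi k = A) /\
    (forall f : baire,
       let Gn n := G (map (fun k => fval f (phi k)) (iota 0 n.+1)) in
       (S f -> exists N, forall n, N <= n -> Gn n = 1) /\
       (~ S f -> exists N, forall n, N <= n -> Gn n = 0)).

Definition base_class (m : nat) : bset -> Prop :=
  if m == 0 then bclopen else Delta0 m.

(* Main.v *)
Require Import Defs.
From mathcomp Require Import all_boot.
From Stdlib Require Import Classical ClassicalEpsilon FunctionalExtensionality.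
Set Implicit Arguments. Unset Strict Implicit. Unset Printing Implicit Defensive.

Definition agree (h g : baire) k := forall i, i < k -> h i = g i.

Lemma agree_mono h g k k' : k <= k' -> agree h g k' -> agree h g k.
Proof. move=> Hk H i Hi; apply: H; exact: leq_trans Hi Hk. Qed.

Lemma fin_bound n (P : 'I_n -> nat -> Prop) :
  (forall i k k', k <= k' -> P i k -> P i k') ->
  (forall i, exists k, P i k) -> exists K, forall i, P i K.
Proof.
move=> mono H.
pose kf i := proj1_sig (constructive_indefinite_description _ (H i)).
exists (\max_(i < n) kf i) => i.
apply: (mono i (kf i)); first exact: leq_bigmax.
exact: (proj2_sig (constructive_indefinite_description _ (H i))).
Qed.

Fixpoint teval_local (f : baire) (e : nat -> nat) (t : term) {struct t} :
  exists k, forall h, agree h f k -> teval h e t = teval f e t.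
Proof.
destruct t as [x|c|n w args|t|n G args t].
- by exists 0.
- by exists 0.
- have IH := fun i => teval_local f e (args i).
  have [K HK] := fin_bound (P := fun i k => forall h, agree h f k ->
      teval h e (args i) = teval f e (args i))
    (fun i k k' Hk H h Hh => H h (agree_mono Hk Hh)) IH.
  exists K => h Hh /=; f_equal; apply: functional_extensionality => i; exact: HK.
- have [k Hk] := teval_local f e t.
  exists (maxn k (teval f e t).+1) => h Hh /=.
  rewrite Hk; last by apply: agree_mono Hh; exact: leq_maxl.
  apply: Hh; exact: leq_maxr.
- have IH := fun i => teval_local f e (args i).
  have [K HK] := fin_bound (P := fun i k => forall h, agree h f k ->
      teval h e (args i) = teval f e (args i))
    (fun i k k' Hk H h Hh => H h (agree_mono Hk Hh)) IH.
  have [k Hk] := teval_local f e t.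
  exists (maxn K (maxn k (teval f e t).+1)) => h Hh; cbn [teval].
  rewrite Hk; last by apply: agree_mono Hh; rewrite leq_max leq_maxl orbT.
  f_equal.
    apply: functional_extensionality => i; apply: HK.
    by apply: agree_mono Hh; exact: leq_maxl.
  apply/eq_in_map => i; rewrite mem_iota add0n => /andP[_ Hi].
  apply: Hh; apply: leq_trans Hi _; rewrite leq_max leq_maxr orbT //.
Qed.

Lemma sat_local A : qfree A -> forall f e, exists k, forall h, agree h f k ->
  (sat h e A <-> sat f e A).
Proof.
elim: A => /=.
- move=> t1 t2 _ f e.
  have [k1 H1] := teval_local f e t1; have [k2 H2] := teval_local f e t2.
  exists (maxn k1 k2) => h Hh.
  rewrite H1; last by apply: agree_mono Hh; exact: leq_maxl.
  rewrite H2 //; apply: agree_mono Hh; exact: leq_maxr.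
- move=> n p args _ f e.
  have [K HK] := fin_bound (P := fun i k => forall h, agree h f k ->
      teval h e (args i) = teval f e (args i))
    (fun i k k' Hk H h Hh => H h (agree_mono Hk Hh)) (fun i => teval_local f e (args i)).
  exists K => h Hh.
  have -> : (fun i => teval h e (args i)) = (fun i => teval f e (args i)).
    by apply: functional_extensionality => i; exact: HK.
  done.
- move=> A IH q f e; have [k Hk] := IH q f e; exists k => h Hh.
  by rewrite (Hk h Hh).
- move=> A IHA B IHB [qa qb] f e.
  have [k1 H1] := IHA qa f e; have [k2 H2] := IHB qb f e.
  exists (maxn k1 k2) => h Hh.
  rewrite (H1 h); last by apply: agree_mono Hh; exact: leq_maxl.
  rewrite (H2 h) //; apply: agree_mono Hh; exact: leq_maxr.
- move=> A IHA B IHB [qa qb] f e.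
  have [k1 H1] := IHA qa f e; have [k2 H2] := IHB qb f e.
  exists (maxn k1 k2) => h Hh.
  rewrite (H1 h); last by apply: agree_mono Hh; exact: leq_maxl.
  rewrite (H2 h) //; apply: agree_mono Hh; exact: leq_maxr.
- move=> A IHA B IHB [qa qb] f e.
  have [k1 H1] := IHA qa f e; have [k2 H2] := IHB qb f e.
  exists (maxn k1 k2) => h Hh.
  rewrite (H1 h); last by apply: agree_mono Hh; exact: leq_maxl.
  rewrite (H2 h) //; apply: agree_mono Hh; exact: leq_maxr.
- by [].
- by [].
Qed.

Lemma qfree_clopen A e : qfree A -> bclopen (fun f => sat f e A).
Proof.
move=> q; split.
- move=> g Hg; have [k Hk] := sat_local q g e; exists k => h Hh.
  by apply/(Hk h Hh).
- move=> g Hg; have [k Hk] := sat_local q g e; exists k => h Hh H.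
  by apply: Hg; apply/(Hk h Hh).
Qed.

Lemma Sigma0_1 S : Sigma0 1 S = bopen S. Proof. by []. Qed.
Lemma Sigma0_SS k S : Sigma0 k.+2 S = exists A : nat -> bset,
  (forall i, Sigma0 k.+1 (bcompl (A i))) /\ (forall x, S x <-> exists i, A i x).
Proof. by []. Qed.

Lemma bopen_ext S T : bopen S -> (forall x, S x <-> T x) -> bopen T.
Proof.
move=> H E g /E Hg; have [k Hk] := H g Hg; exists k => h Hh; apply/E; exact: Hk.
Qed.

Lemma Sigma0_ext n S T : Sigma0 n S -> (forall x, S x <-> T x) -> Sigma0 n T.
Proof.
case: n => [|[|k]] //.
- rewrite !Sigma0_1; exact: bopen_ext.
- rewrite !Sigma0_SS => [[A [HA HS]]] E; exists A; split => // x.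
  by rewrite -E.
Qed.

Lemma bcomplK S x : bcompl (bcompl S) x <-> S x.
Proof. rewrite /bcompl; split; [exact: NNPP | tauto]. Qed.

Lemma Sigma0_full_empty n : Sigma0 n.+1 (fun _ => True) /\ Sigma0 n.+1 (fun _ => False).
Proof.
elim: n => [|n [IHf IHe]].
- rewrite !Sigma0_1; split; first by move=> g _; exists 0.
  by move=> g.
- rewrite !Sigma0_SS; split.
  + exists (fun _ _ => True); split; last by move=> x; split => // _; exists 0.
    move=> i; apply: Sigma0_ext IHe _ => x; rewrite /bcompl; tauto.
  + exists (fun _ _ => False); split; last by move=> x; split => // [[]].
    move=> i; apply: Sigma0_ext IHf _ => x; rewrite /bcompl; tauto.
Qed.

Lemma Sigma0_union n A B : Sigma0 n A -> Sigma0 n B -> Sigma0 n (fun x => A x \/ B x).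
Proof.
case: n => [|[|k]] //.
- rewrite !Sigma0_1 => HA HB g [Hg|Hg].
  + have [k Hk] := HA g Hg; exists k => h Hh; left; exact: Hk.
  + have [k Hk] := HB g Hg; exists k => h Hh; right; exact: Hk.
- rewrite !Sigma0_SS => [[a [Ha EA]]] [b [Hb EB]].
  exists (fun i => match odflt (inl 0) (unpickle i : option (nat + nat)%type) with
                   | inl j => a j | inr j => b j end); split.
  + move=> i; case: (odflt _ _) => j; [exact: Ha | exact: Hb].
  + move=> x; split.
    * case=> [/EA [j Hj]|/EB [j Hj]].
      - by exists (pickle (inl j : (nat + nat)%type)); rewrite pickleK.
      - by exists (pickle (inr j : (nat + nat)%type)); rewrite pickleK.
    * case=> i; case: (odflt _ _) => j Hj; [left; apply/EA | right; apply/EB];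
        by exists j.
Qed.

Lemma Sigma0_inter n A B : Sigma0 n A -> Sigma0 n B -> Sigma0 n (fun x => A x /\ B x).
Proof.
case: n => [|[|k]] //.
- rewrite !Sigma0_1 => HA HB g [Hg1 Hg2].
  have [k1 Hk1] := HA g Hg1; have [k2 Hk2] := HB g Hg2.
  exists (maxn k1 k2) => h Hh; split.
  + apply: Hk1 => i Hi; apply: Hh; apply: leq_trans Hi _; exact: leq_maxl.
  + apply: Hk2 => i Hi; apply: Hh; apply: leq_trans Hi _; exact: leq_maxr.
- rewrite !Sigma0_SS => [[a [Ha EA]]] [b [Hb EB]].
  exists (fun i x => let p := odflt (0, 0) (unpickle i : option (nat * nat)%type) in
                     a p.1 x /\ b p.2 x); split.
  + move=> i; set p := odflt _ _.
    apply: Sigma0_ext (Sigma0_union (Ha p.1) (Hb p.2)) _ => x.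
    rewrite /bcompl /=; split; [tauto|].
    move=> H; apply: NNPP => H'; apply: H; split; apply: NNPP => ?; tauto.
  + move=> x; split.
    * case=> [/EA [i Hi] /EB [j Hj]].
      by exists (pickle (i, j)); rewrite /= pickleK.
    * case=> i /= [H1 H2]; split; [apply/EA | apply/EB]; eexists; eassumption.
Qed.

Definition BA (C : bset -> Prop) :=
  (forall S T, C S -> (forall x, S x <-> T x) -> C T) /\
  C (fun _ => True) /\ C (fun _ => False) /\
  (forall S, C S -> C (bcompl S)) /\
  (forall S T, C S -> C T -> C (fun x => S x /\ T x)) /\
  (forall S T, C S -> C T -> C (fun x => S x \/ T x)).

Lemma BA_clopen : BA bclopen.
Proof.
have ex : forall S T, bclopen S -> (forall x, S x <-> T x) -> bclopen T.
  move=> S T [H1 H2] E; split; first exact: bopen_ext H1 E.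
  by apply: bopen_ext H2 _ => x; rewrite /bcompl E.
have [f1 e1] := Sigma0_full_empty 0.
split; first exact: ex.
split; first by split => //; apply: bopen_ext e1 _ => x; rewrite /bcompl; tauto.
split; first by split => //; apply: bopen_ext f1 _ => x; rewrite /bcompl; tauto.
split.
  move=> S [H1 H2]; split => //; apply: bopen_ext H1 _ => x; rewrite bcomplK //.
split.
- move=> S T [H1 H2] [H3 H4]; split; first exact: (Sigma0_inter (n := 1)).
  apply: bopen_ext (Sigma0_union (n := 1) H2 H4) _ => x; rewrite /bcompl.
  split; [tauto|] => H; apply: NNPP => H'; apply: H; split; apply: NNPP => ?; tauto.
- move=> S T [H1 H2] [H3 H4]; split; first exact: (Sigma0_union (n := 1)).
  apply: bopen_ext (Sigma0_inter (n := 1) H2 H4) _ => x; rewrite /bcompl; tauto.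
Qed.

Lemma BA_Delta0 n : BA (Delta0 n.+1).
Proof.
have ex : forall S T, Delta0 n.+1 S -> (forall x, S x <-> T x) -> Delta0 n.+1 T.
  move=> S T [H1 H2] E; split; first exact: Sigma0_ext H1 E.
  by apply: Sigma0_ext H2 _ => x; rewrite /bcompl E.
have [f1 e1] := Sigma0_full_empty n.
split; first exact: ex.
split; first by split => //; apply: Sigma0_ext e1 _ => x; rewrite /bcompl; tauto.
split; first by split => //; apply: Sigma0_ext f1 _ => x; rewrite /bcompl; tauto.
split.
  move=> S [H1 H2]; split => //; apply: Sigma0_ext H1 _ => x; rewrite bcomplK //.
split.
- move=> S T [H1 H2] [H3 H4]; split; first exact: Sigma0_inter.
  apply: Sigma0_ext (Sigma0_union H2 H4) _ => x; rewrite /bcompl.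
  split; [tauto|] => H; apply: NNPP => H'; apply: H; split; apply: NNPP => ?; tauto.
- move=> S T [H1 H2] [H3 H4]; split; first exact: Sigma0_union.
  apply: Sigma0_ext (Sigma0_inter H2 H4) _ => x; rewrite /bcompl; tauto.
Qed.

Lemma BA_list C (b : nat -> baire -> bool) : BA C ->
  (forall k, C (fun f => b k f = true)) ->
  forall l (H : seq bool -> Prop), C (fun f => H (map (fun k => b k f) l)).
Proof.
case=> [Cext [Cfull [Cempty [Ccomp [Cint Cuni]]]]] Hb.
elim=> [|k l IH] H /=.
- case: (classic (H [::])) => h.
  + by apply: Cext Cfull _ => x; split.
  + by apply: Cext Cempty _ => x; split.
- apply: Cext (Cuni _ _ (Cint _ _ (Hb k) (IH (fun s => H (true :: s))))
                 (Cint _ _ (Ccomp _ (Hb k)) (IH (fun s => H (false :: s))))) _ => x /=.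
  rewrite /bcompl; case: (b k x); split.
  + by case=> [[_ ?]|[? _]].
  + by move=> ?; left.
  + by case=> [[? _]|[_ ?]].
  + by move=> ?; right.
Qed.

Lemma sigpi n : forall B e,
  (isSigma n.+1 B -> Sigma0 n.+1 (fun f => sat f e B)) /\
  (isPi n.+1 B -> Pi0 n.+1 (fun f => sat f e B)).
Proof.
elim: n => [|n IH] B e.
- rewrite /Pi0 !Sigma0_1; split.
  + case: B => // x B /= q g [v Hv].
    have [k Hk] := sat_local q g (upd e x v).
    by exists k => h Hh; exists v; apply/(Hk h Hh).
  + case: B => // x B /= q g Hg.
    have [v Hv] : exists v, ~ sat g (upd e x v) B.
      by apply: not_all_ex_not.
    have [k Hk] := sat_local q g (upd e x v).
    by exists k => h Hh H; apply: Hv; apply/(Hk h Hh).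
- rewrite /Pi0 !Sigma0_SS; split.
  + case: B => // x B /= q.
    exists (fun v f => sat f (upd e x v) B); split => // v.
    exact: (proj2 (IH B (upd e x v)) q).
  + case: B => // x B /= q.
    exists (fun v f => ~ sat f (upd e x v) B); split.
    * move=> v; apply: Sigma0_ext (proj1 (IH B (upd e x v)) q) _ => f.
      by rewrite bcomplK.
    * move=> f; rewrite /bcompl; split; first exact: not_all_ex_not.
      by case=> v Hv H; apply: Hv.
Qed.

Lemma fval_true f A : fval f A = true <-> sat f (fun _ => 0) A.
Proof. rewrite /fval; case: excluded_middle_informative => //. Qed.

Lemma clopen_closed_inter (D : nat -> bset) :
  (forall j, bclopen (D j)) -> Sigma0 1 (bcompl (fun x => forall j, D j x)).
Proof.
move=> HD g Hg.
have [j Hj] : exists j, ~ D j g by apply: not_all_ex_not.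
have [k Hk] := (proj2 (HD j)) g Hj.
by exists k => h Hh H; apply: (Hk h Hh).
Qed.

Lemma ui_Sigma2 S : union_of_inters bclopen S -> Sigma0 2 S.
Proof.
case=> A [HA E]; rewrite Sigma0_SS.
exists (fun i x => forall j, A i j x); split => //.
move=> i; exact: clopen_closed_inter.
Qed.

Lemma iu_compl S : inter_of_unions bclopen S -> union_of_inters bclopen (bcompl S).
Proof.
have [_ [_ [_ [Ccomp _]]]] := BA_clopen.
case=> A [HA E]; exists (fun i j => bcompl (A i j)); split.
  by move=> i j; apply: Ccomp.
move=> x; rewrite /bcompl E; split.
- move=> H; have [i Hi] := not_all_ex_not _ _ H; exists i => j Hj; apply: Hi.
  by exists j.
- by case=> i Hi H; have [j Hj] := H i; apply: (Hi j).
Qed.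

Theorem mainTheorem11 (m : nat) (S : bset) :
  guessable m S ->
  Delta' (m + 2) S /\
  union_of_inters (base_class m) S /\ inter_of_unions (base_class m) S.
Proof.
move=> [Sig [phi [G [_ [Hphi [_ Hconv]]]]]].
have BAC : BA (base_class m).
  by rewrite /base_class; case: (m) => [|m'] /=; [exact: BA_clopen | exact: BA_Delta0].
have Hbase : forall k, base_class m (fun f => fval f (phi k) = true).
  move=> k; have [Hd _] := Hphi k.
  have [Cext _] := BAC.
  move: Hd; rewrite /base_class; case: (m) => [|m'] /= Hd.
  - apply: (proj1 BA_clopen) (qfree_clopen (fun _ => 0) Hd) _ => f.
    by rewrite fval_true.
  - case: Hd => [[B1 [S1 E1]] [B2 [P2 E2]]]; split.
    + apply: Sigma0_ext (proj1 (sigpi _ B1 (fun _ => 0)) S1) _ => f.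
      by rewrite fval_true E1.
    + apply: Sigma0_ext (proj2 (sigpi _ B2 (fun _ => 0)) P2) _ => f.
      by rewrite /bcompl fval_true E2.
have UI : union_of_inters (base_class m) S.
  exists (fun N n f => N <= n ->
           G (map (fun k => fval f (phi k)) (iota 0 n.+1)) = 1); split.
    move=> N n.
    exact: (BA_list (b := fun k f => fval f (phi k)) BAC Hbase (iota 0 n.+1)
              (fun s => N <= n -> G s = 1)).
  move=> f; have [H1 H0] := Hconv f; split; first exact: H1.
  case=> N HN; case: (classic (S f)) => // nS.
  have [N' HN'] := H0 nS.
  have := HN (maxn N N') (leq_maxl _ _).
  by rewrite HN' // leq_maxr.
have IU : inter_of_unions (base_class m) S.
  exists (fun N n f => N <= n /\
           G (map (fun k => fval f (phi k)) (iota 0 n.+1)) <> 0); split.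
    move=> N n.
    exact: (BA_list (b := fun k f => fval f (phi k)) BAC Hbase (iota 0 n.+1)
              (fun s => N <= n /\ G s <> 0)).
  move=> f; have [H1 H0] := Hconv f; split.
    case/H1 => N HN i; exists (maxn i N); split; first exact: leq_maxl.
    by rewrite HN // leq_maxr.
  move=> Hall; case: (classic (S f)) => // nS.
  have [N' HN'] := H0 nS.
  have [j [Hj1 Hj2]] := Hall N'.
  by case: Hj2; rewrite HN'.
split => //.
rewrite /Delta'; move: UI IU; rewrite /base_class; case: (m) => [|m'] /= UI IU.
- split; first exact: ui_Sigma2.
  exact: ui_Sigma2 (iu_compl IU).
- by rewrite addn2 /= subn2 /=; split.
Qed.
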